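(* Let $L,L'$ be finite simplicial complexes, $\varphi: L\to L'$ a surjective simplicial finite-fibration, and $n\ge2$. (i) If there is a simplicial map $\omega: L'\to L$ with $\varphi\circ\omega\sim 1_{L'}$ (a right strong equivalence), then $\mathrm{TC}_n(\varphi)=\mathrm{TC}_n(L')$. (ii) If there is a simplicial map $\gamma: L'\to L$ with $\gamma\circ\varphi\sim 1_L$ (a left strong equivalence), then $\mathrm{TC}_n(\varphi)=\mathrm{TC}_n(L)$. (iii) If $\varphi$ is a strong equivalence, then $\mathrm{TC}_n(\varphi)=\mathrm{TC}_n(L)=\mathrm{TC}_n(L')$.
   Context: Simplicial complexes are abstract and edge-path connected; $K^n$ is the $n$-fold categorical product (vertex set $\mathrm{VX}(K)^n$; a set of vertices is a simplex iff each coordinate projection is a simplex). Simplicial maps $f,g: K\to K'$ are contiguous if $f(\sigma)\cup g(\sigma)$ is a simplex for every simplex $\sigma$; $f\sim g$ if joined by a finite chain of contiguous simplicial maps. A strong equivalence $f: K\to K'$ is a simplicial map admitting a simplicial $g: K'\to K$ with $f\circ g\sim1_{K'}$ and $g\circ f\sim 1_K$. $\mathrm{SD}(\varphi_1,\dots,\varphi_m)$ for simplicial maps $K\to K'$ is the least $k\ge0$ such that $K$ is a union of subcomplexes $K_0,\dots,K_k$ with $\varphi_i|_{K_j}\sim\varphi_l|_{K_j}$ for all $i,l,j$. With $p_i: K^n\to K$ the projections, $\mathrm{TC}_n(K)=\mathrm{SD}(p_1,\dots,p_n)$ and, for surjective $\varphi: L\to L'$, $\mathrm{TC}_n(\varphi)=\mathrm{SD}(\varphi\circ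 p_1,\dots,\varphi\circ p_n)$ with $p_i: L^n\to L$. $I_m$ is the complex with vertices $0,\dots,m$ and edges $\{i,i+1\}$; $\varphi: L\to L'$ is a simplicial finite-fibration if for every finite complex $N$, $m\ge1$, inclusion $i: N\times\{0\}\to N\times I_m$ and simplicial $g: N\times\{0\}\to L$, $G: N\times I_m\to L'$ with $\varphi\circ g=G\circ i$, there is simplicial $\widetilde G$ with $\widetilde G\circ i=g$, $\varphi\circ\widetilde G=G$. *)

(* Defs.v *)
From Stdlib Require Import Relations ClassicalEpsilon.
From mathcomp Require Import all_boot.
Set Implicit Arguments. Unset Strict Implicit. Unset Printing Implicit Defensive.

Record sc := SC { vert : finType; simplex : pred {set vert} }.
Arguments simplex : clear implicits.

(* Axioms of an abstract simplicial complex, together with the standing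
   assumption that complexes are edge-path connected. *)
Definition is_sc (K : sc) : Prop :=
  [/\ ~~ simplex K set0,
      (forall v : vert K, simplex K [set v]),
      (forall s t : {set vert K}, simplex K s -> t \subset s -> t != set0 ->
          simplex K t)
    & (forall u v : vert K, connect [rel a b | simplex K [set a; b]] u v)].

Definition prodsc (K1 K2 : sc) : sc :=
  @SC (vert K1 * vert K2)%type
      (fun s => [&& s != set0, simplex K1 (fst @: s) & simplex K2 (snd @: s)]).

Definition powsc (K : sc) (n : nat) : sc :=
  @SC {ffun 'I_n -> vert K}
      (fun s => (s != set0) && [forall i : 'I_n, simplex K [set (x : {ffun 'I_n -> vert K}) i | x in s]]).

Definition proj (K : sc) (n : nat) (i : 'I_n) : vert (powsc K n) -> vert K :=
  fun x => x i.

(* I_m : vertices 0..m, edges {i, i+1}. *)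
Definition Isc (m : nat) : sc :=
  @SC 'I_m.+1
      (fun s => (s != set0) &&
         [forall x in s, forall y in s,
            [|| nat_of_ord x == y, (nat_of_ord x).+1 == y | (nat_of_ord y).+1 == x]]).

Definition simplicial (K K' : sc) (f : vert K -> vert K') : Prop :=
  forall s, simplex K s -> simplex K' (f @: s).

Definition subcomplex (K : sc) (P : pred {set vert K}) : Prop :=
  (forall s, P s -> simplex K s) /\
  (forall s t : {set vert K}, P s -> t \subset s -> t != set0 -> P t).

Definition contiguous_on (K K' : sc) (P : pred {set vert K})
    (f g : vert K -> vert K') : Prop :=
  (forall s, P s -> simplex K' (f @: s)) /\
  (forall s, P s -> simplex K' (g @: s)) /\
  (forall s, P s -> simplex K' (f @: s :|: g @: s)).

Definition homotopic_on (K K' : sc) (P : pred {set vert K})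
    (f g : vert K -> vert K') : Prop :=
  clos_refl_trans (vert K -> vert K') (@contiguous_on K K' P) f g.

Definition homotopic (K K' : sc) (f g : vert K -> vert K') : Prop :=
  homotopic_on (simplex K) f g.

Definition strong_equivalence (K K' : sc) (f : vert K -> vert K') : Prop :=
  simplicial f /\
  exists g : vert K' -> vert K, simplicial g /\
    homotopic (K:=K') (K':=K') (f \o g) id /\ homotopic (K:=K) (K':=K) (g \o f) id.

Definition SD_le (K K' : sc) (m : nat) (phis : 'I_m -> vert K -> vert K')
    (k : nat) : Prop :=
  exists Ks : 'I_k.+1 -> pred {set vert K},
    (forall j, subcomplex (Ks j)) /\
    (forall s, simplex K s -> exists j, Ks j s) /\
    (forall i l j, homotopic_on (Ks j) (phis i) (phis l)).

Definition is_SD (K K' : sc) (m : nat) (phis : 'I_m -> vert K -> vert K')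
    (k : nat) : Prop :=
  SD_le phis k /\ forall k', SD_le phis k' -> k <= k'.

Definition SD (K K' : sc) (m : nat) (phis : 'I_m -> vert K -> vert K') : nat :=
  epsilon (inhabits 0) (is_SD phis).

Definition TC (K : sc) (n : nat) : nat := SD (@proj K n).

Definition TCmap (L L' : sc) (phi : vert L -> vert L') (n : nat) : nat :=
  SD (fun i : 'I_n => phi \o @proj L n i).

(* Simplicial finite-fibration. N x {0} is identified with N via x |-> (x, 0). *)
Definition finite_fibration (L L' : sc) (phi : vert L -> vert L') : Prop :=
  simplicial phi /\
  forall (N : sc) (m : nat), is_sc N -> 0 < m ->
  forall (g : vert N -> vert L) (G : vert (prodsc N (Isc m)) -> vert L'),
    simplicial g -> simplicial G ->
    (forall x : vert N, phi (g x) = G (x, ord0)) ->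
    exists Gt : vert (prodsc N (Isc m)) -> vert L,
      simplicial Gt /\ (forall x : vert N, Gt (x, ord0) = g x) /\
      (forall y, phi (Gt y) = G y).

(* Main.v *)
Require Import Defs.
From mathcomp Require Import all_boot.
From Stdlib Require Import Relations FunctionalExtensionality PropExtensionality.
Set Implicit Arguments. Unset Strict Implicit. Unset Printing Implicit Defensive.

Section Htp.
Variables (K K' : sc).

Lemma contig_sym (P : pred {set vert K}) (f g : vert K -> vert K') :
  contiguous_on P f g -> contiguous_on P g f.
Proof. by case=> a [b c]; split=> //; split=> // s Ps; rewrite setUC; apply: c. Qed.

Lemma htp_sym (P : pred {set vert K}) (f g : vert K -> vert K') :
  homotopic_on P f g -> homotopic_on P g f.
Proof.
move=> H; induction H.
- by apply: rt_step; apply: contig_sym.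
- exact: rt_refl.
- exact: rt_trans IHclos_refl_trans2 IHclos_refl_trans1.
Qed.

Lemma htp_trans (P : pred {set vert K}) (f g h : vert K -> vert K') :
  homotopic_on P f g -> homotopic_on P g h -> homotopic_on P f h.
Proof. exact: rt_trans. Qed.

Lemma htp_mono (P Q : pred {set vert K}) (f g : vert K -> vert K') :
  (forall s, P s -> Q s) -> homotopic_on Q f g -> homotopic_on P f g.
Proof.
move=> PQ H; induction H.
- apply: rt_step; case: H => a [b c]; split; [|split].
  + by move=> s /PQ; apply: a.
  + by move=> s /PQ; apply: b.
  + by move=> s /PQ; apply: c.
- exact: rt_refl.
- exact: rt_trans IHclos_refl_trans1 IHclos_refl_trans2.
Qed.
End Htp.

Lemma htp_compr (K1 K K' : sc) (P1 : pred {set vert K1}) (P : pred {set vert K})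
  (h : vert K1 -> vert K) (f g : vert K -> vert K') :
  (forall s, P1 s -> P (h @: s)) -> homotopic_on P f g ->
  homotopic_on P1 (f \o h) (g \o h).
Proof.
move=> Hh H; induction H as [x y H| x | x y z H1 IH1 H2 IH2].
- apply: rt_step; case: H => a [b c]; split; [|split].
  + by move=> s /Hh Ps; rewrite (imset_comp x h); apply: a.
  + by move=> s /Hh Ps; rewrite (imset_comp y h); apply: b.
  + by move=> s /Hh Ps; rewrite (imset_comp x h) (imset_comp y h); apply: c.
- exact: rt_refl.
- exact: rt_trans IH1 IH2.
Qed.

Lemma htp_compl (K K' K'' : sc) (P : pred {set vert K})
  (q : vert K' -> vert K'') (f g : vert K -> vert K') :
  simplicial q -> homotopic_on P f g ->
  homotopic_on P (q \o f) (q \o g).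
Proof.
move=> Hq H; induction H as [x y H| x | x y z H1 IH1 H2 IH2].
- apply: rt_step; case: H => a [b c]; split; [|split].
  + by move=> s Ps; rewrite (imset_comp q x); apply: Hq; apply: a.
  + by move=> s Ps; rewrite (imset_comp q y); apply: Hq; apply: b.
  + by move=> s Ps; rewrite (imset_comp q x) (imset_comp q y) -imsetU; apply: Hq; apply: c.
- exact: rt_refl.
- exact: rt_trans IH1 IH2.
Qed.

Lemma pow_face (K : sc) n : is_sc K ->
  forall s t : {set vert (powsc K n)}, simplex (powsc K n) s -> t \subset s -> t != set0 ->
  simplex (powsc K n) t.
Proof.
case=> _ _ Hf _ s t /andP[_ /forallP Hs] ts tn.
apply/andP; split => //; apply/forallP => i.
apply: (Hf _ _ (Hs i)); first exact: imsetS.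
case/set0Pn: tn => x xt; apply/set0Pn; exists (x i); exact: imset_f.
Qed.

Definition powmap (K K' : sc) n (f : vert K -> vert K') :
  vert (powsc K n) -> vert (powsc K' n) := fun x => [ffun i => f (x i)].
Arguments powmap {K K'} n f x.

Lemma powmap_simpl (K K' : sc) n (f : vert K -> vert K') :
  simplicial f -> simplicial (powmap n f).
Proof.
move=> Hf s /andP[sn /forallP Hs]; apply/andP; split.
  case/set0Pn: sn => x xs; apply/set0Pn; exists (powmap n f x); exact: imset_f.
apply/forallP => i.
have -> : [set (y : {ffun 'I_n -> vert K'}) i | y in powmap n f @: s] =
          f @: [set (x : {ffun 'I_n -> vert K}) i | x in s].
  by rewrite -!imset_comp; apply: eq_imset => x /=; rewrite ffunE.
exact: Hf.
Qed.

Lemma proj_simpl (K : sc) n (i : 'I_n) :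
  forall s, simplex (powsc K n) s -> simplex K (proj i @: s).
Proof. by move=> s /andP[_ /forallP]; apply. Qed.

Lemma SD_pull (K1 K2 K' : sc) m (h : vert K1 -> vert K2)
  (phis : 'I_m -> vert K2 -> vert K') (psis : 'I_m -> vert K1 -> vert K') k :
  (forall s t : {set vert K1}, simplex K1 s -> t \subset s -> t != set0 -> simplex K1 t) ->
  simplicial h ->
  (forall i, homotopic_on (simplex K1) (psis i) (phis i \o h)) ->
  SD_le phis k -> SD_le psis k.
Proof.
move=> Hf Hh Hp [Ks [Hsub [Hcov Hhom]]].
exists (fun j (s : {set vert K1}) => simplex K1 s && Ks j (h @: s)).
split; [|split].
- move=> j; split; first by move=> s /andP[].
  move=> s t /andP[s1 s2] ts tn; apply/andP; split; first exact: Hf s1 ts tn.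
  apply: (proj2 (Hsub j)) s2 _ _; first exact: imsetS.
  case/set0Pn: tn => x xt; apply/set0Pn; exists (h x); exact: imset_f.
- move=> s Ss; have [j Hj] := Hcov _ (Hh _ Ss); exists j; by rewrite Ss.
- move=> i l j.
  apply: htp_trans; first by apply: htp_mono (Hp i) => s /andP[].
  apply: htp_trans; first by apply: htp_compr (Hhom i l j) => s /andP[].
  by apply: htp_sym; apply: htp_mono (Hp l) => s /andP[].
Qed.

Lemma SD_compl (K K' K'' : sc) m (phis : 'I_m -> vert K -> vert K')
  (q : vert K' -> vert K'') k :
  simplicial q -> SD_le phis k -> SD_le (fun i => q \o phis i) k.
Proof.
move=> Hq [Ks [Hsub [Hcov Hhom]]]; exists Ks; split => //; split => //.
by move=> i l j; apply: htp_compl.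
Qed.

Lemma SD_eq (K1 K1' K2 K2' : sc) m m' (A : 'I_m -> vert K1 -> vert K1')
  (B : 'I_m' -> vert K2 -> vert K2') :
  (forall k, SD_le A k <-> SD_le B k) -> SD A = SD B.
Proof.
move=> H.
have E : is_SD A = is_SD B.
  apply: functional_extensionality => k; apply: propositional_extensionality.
  rewrite /is_SD; split => [[H1 H2]|[H1 H2]]; split.
  - by apply/H.
  - by move=> k' /H; apply: H2.
  - by apply/H.
  - by move=> k' /H; apply: H2.
by rewrite /SD E.
Qed.

Lemma simpl_id (K : sc) : simplicial (fun x : vert K => x).
Proof. by move=> s Ss; rewrite imset_id. Qed.

Theorem corollary5p5 (L L' : sc) (phi : vert L -> vert L') (n : nat) :
  is_sc L -> is_sc L' ->
  (forall y : vert L', exists x : vert L, phi x = y) ->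
  finite_fibration phi ->
  2 <= n ->
  [/\ (forall omega : vert L' -> vert L, simplicial omega ->
         homotopic (K:=L') (K':=L') (phi \o omega) id ->
         TCmap phi n = TC L' n),
      (forall gamma : vert L' -> vert L, simplicial gamma ->
         homotopic (K:=L) (K':=L) (gamma \o phi) id ->
         TCmap phi n = TC L n)
    & (strong_equivalence phi ->
         TCmap phi n = TC L n /\ TC L n = TC L' n)].
Proof.
move=> HL HL' _ [Hphi _] _.
have faceL := pow_face (n:=n) HL.
have faceL' := pow_face (n:=n) HL'.
have part1 : forall omega : vert L' -> vert L, simplicial omega ->
         homotopic (K:=L') (K':=L') (phi \o omega) id ->
         TCmap phi n = TC L' n.
  move=> om Hom Hh; rewrite /TCmap /TC; apply: SD_eq => k; split.
  - apply: (SD_pull faceL' (powmap_simpl (n:=n) Hom)) => i.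
    have -> : (phi \o proj i) \o powmap n om = (phi \o om) \o @proj L' n i.
      by apply: functional_extensionality => x; rewrite /= /proj /powmap ffunE.
    apply: htp_sym; apply: (htp_compr (P1 := simplex (powsc L' n)) _ Hh).
    exact: proj_simpl.
  - apply: (SD_pull faceL (powmap_simpl (n:=n) Hphi)) => i.
    have -> : (@proj L' n i \o powmap n phi) = phi \o proj i.
      by apply: functional_extensionality => x; rewrite /= /proj /powmap ffunE.
    exact: rt_refl.
have part2 : forall gamma : vert L' -> vert L, simplicial gamma ->
         homotopic (K:=L) (K':=L) (gamma \o phi) id ->
         TCmap phi n = TC L n.
  move=> ga Hga Hh; rewrite /TCmap /TC; apply: SD_eq => k; split.
  - move/(SD_compl Hga).
    apply: (SD_pull faceL (@simpl_id (powsc L n))) => i.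
    have -> : (ga \o (phi \o proj i)) \o (fun x => x) = (ga \o phi) \o @proj L n i.
      by apply: functional_extensionality.
    apply: htp_sym; apply: (htp_compr (P1 := simplex (powsc L n)) _ Hh).
    exact: proj_simpl.
  - exact: SD_compl.
split => //.
case=> _ [g [Hg [H1 H2]]]; split; first exact: part2 H2.
by rewrite -(part2 g Hg H2) (part1 g Hg H1).
Qed.
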